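(* Let $M$ be the set of $H\times W$ images in HSV format $x=\{(h,s,v)_{ij}\}^{H\times W}$ with $s_{ij},v_{ij}\in[0,1]$ for which the transformation below is well defined (nonzero denominators). For such $x$ let $s_{\mathrm{mean}},s_{\max},v_{\mathrm{mean}},v_{\max}$ be the means and maximums over pixels of the saturation and brightness values. For $\theta=(\theta_S,\theta_V)$ define \[\mathsf{SV}(x,\theta)=\left\{\left(h,\ \frac{s+(2^{\theta_S}-1)s_{\mathrm{mean}}}{\mathsf{MAX}},\ \frac{v+(2^{\theta_V}-1)v_{\mathrm{mean}}}{\mathsf{MAX}}\right)_{ij}\right\}^{H\times W},\] where $\mathsf{MAX}=\max\big(s_{\max}+(2^{\theta_S}-1)s_{\mathrm{mean}},\ v_{\max}+(2^{\theta_V}-1)v_{\mathrm{mean}}\big)$. Then for all $x\in M$ and $\theta_1,\theta_2\in\mathbb{R}_{\ge0}^2$, $\mathsf{SV}(\mathsf{SV}(x,\theta_1),\theta_2)=\mathsf{SV}(x,\theta_1+\theta_2)$.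
   Context: The hue $h$ is left unchanged by $\mathsf{SV}$; only saturation and brightness values are shifted and renormalized. *)

(* Defs.v *)
From HB Require Import structures.
From mathcomp Require Import all_boot all_order all_algebra.
From mathcomp Require Import all_classical all_reals all_analysis.
Set Implicit Arguments. Unset Strict Implicit. Unset Printing Implicit Defensive.
Import Order.TTheory GRing.Theory Num.Theory.
Local Open Scope ring_scope.

(* An H x W HSV image: pixel (i,j) is the triple ((h, s), v). *)
Definition hsv_image (R : realType) (H W : nat) := 'M[(R * R * R)%type]_(H, W).

Section SV.
Variables (R : realType) (H W : nat).

Definition hue (x : hsv_image R H W) i j : R := (x i j).1.1.
Definition sat (x : hsv_image R H W) i j : R := (x i j).1.2.
Definition bri (x : hsv_image R H W) i j : R := (x i j).2.

Definition chmean (c : 'I_H -> 'I_W -> R) : R :=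
  (\sum_(i < H) \sum_(j < W) c i j) / (H * W)%:R.
Definition chmax (c : 'I_H -> 'I_W -> R) : R :=
  \big[Num.max/0]_(i < H) \big[Num.max/0]_(j < W) c i j.

Definition SVmax (x : hsv_image R H W) (th : R * R) : R :=
  Num.max (chmax (sat x) + (2 `^ th.1 - 1) * chmean (sat x))
          (chmax (bri x) + (2 `^ th.2 - 1) * chmean (bri x)).

Definition SV (x : hsv_image R H W) (th : R * R) : hsv_image R H W :=
  \matrix_(i, j)
    (hue x i j,
     (sat x i j + (2 `^ th.1 - 1) * chmean (sat x)) / SVmax x th,
     (bri x i j + (2 `^ th.2 - 1) * chmean (bri x)) / SVmax x th).

Definition inM (x : hsv_image R H W) : Prop :=
  (forall i j, 0 <= sat x i j <= 1 /\ 0 <= bri x i j <= 1) /\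
  (forall th : R * R, 0 <= th.1 -> 0 <= th.2 -> SVmax x th != 0).

End SV.

(* Main.v *)
Require Import Defs.
From HB Require Import structures.
From mathcomp Require Import all_boot all_order all_algebra.
From mathcomp Require Import all_classical all_reals all_analysis.
From mathcomp Require Import ring lra.
Import Order.TTheory GRing.Theory Num.Theory.
Local Open Scope ring_scope.

Lemma bigmax_mono (R : realType) (I : finType) (j0 : I) (F : I -> R) (g : R -> R) :
  (forall i, 0 <= F i) -> (forall i, 0 <= g (F i)) ->
  {homo g : a b / a <= b} ->
  \big[Num.max/0]_(i : I) g (F i) = g (\big[Num.max/0]_(i : I) F i).
Proof.
move=> F0 gF0 gmono.
have [i0 _ E0] := @eq_bigmax _ _ I 0 j0 predT F isT (fun i _ => F0 i).
have [i1 _ E1] := @eq_bigmax _ _ I 0 j0 predT (fun i => g (F i)) isT (fun i _ => gF0 i).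
rewrite E0 E1; apply/le_anti/andP; split.
  by apply: gmono; rewrite -E0; exact: le_bigmax.
by rewrite -E1; exact: (le_bigmax _ (fun i => g (F i))).
Qed.

Lemma chmax_aff (R : realType) (H W : nat) (c : 'I_H.+1 -> 'I_W.+1 -> R) (k M : R) :
  (forall i j, 0 <= c i j) -> 0 <= k -> 0 < M ->
  chmax (fun i j => (c i j + k) / M) = (chmax c + k) / M.
Proof.
move=> c0 k0 M0; rewrite /chmax.
set g := fun t : R => (t + k) / M.
have gmono : {homo g : a b / a <= b}.
  by move=> a b ab; rewrite /g ler_pM2r ?invr_gt0 // lerD2r.
have gpos : forall t, 0 <= t -> 0 <= g t.
  by move=> t t0; rewrite /g divr_ge0 // ?addr_ge0 // ltW.
transitivity (\big[Num.max/0]_(i < H.+1) g (\big[Num.max/0]_(j < W.+1) c i j)).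
  apply: eq_bigr => i _.
  exact: (@bigmax_mono R _ ord0 (c i) g (c0 i) (fun j => gpos _ (c0 i j)) gmono).
apply: (@bigmax_mono R _ ord0 _ g) => //.
- by move=> i; exact: bigmax_ge_id.
- by move=> i; apply: gpos; exact: bigmax_ge_id.
Qed.

Lemma chmean_aff (R : realType) (H W : nat) (c : 'I_H -> 'I_W -> R) (k M : R) :
  (H * W)%N != 0%N -> M != 0 ->
  chmean (fun i j => (c i j + k) / M) = (chmean c + k) / M.
Proof.
move=> HW M0; rewrite /chmean.
have HW' : (H * W)%:R != 0 :> R by rewrite pnatr_eq0.
under eq_bigr => i _ do under eq_bigr => j _ do rewrite mulrDl.
under eq_bigr => i _ do rewrite big_split /= sumr_const card_ord.
rewrite big_split /= sumr_const card_ord.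
have -> : \sum_(i < H) \sum_(i0 < W) c i i0 / M = (\sum_(i < H) \sum_(j < W) c i j) / M.
  by rewrite mulr_suml; apply: eq_bigr => i _; rewrite mulr_suml.
rewrite -mulrnA -mulr_natr mulnC.
by field; rewrite M0 !pnatr_eq0 /=; move: HW; rewrite muln_eq0 negb_or => /andP[-> ->].
Qed.


Lemma pow2_ge1 (R : realType) (t : R) : 0 <= t -> 0 <= 2 `^ t - 1.
Proof.
move=> t0; rewrite subr_ge0 -{1}(powRr0 2).
by apply: ler_powR => //; rewrite ler1n.
Qed.

Theorem lemma4 (R : realType) (H W : nat) (x : hsv_image R H W)
  (th1 th2 : (R * R)%type) :
  inM x ->
  0 <= th1.1 -> 0 <= th1.2 -> 0 <= th2.1 -> 0 <= th2.2 ->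
  SV (SV x th1) th2 = SV x (th1.1 + th2.1, th1.2 + th2.2).
Proof.
move=> [xr xne] t11 t12 t21 t22.
case: H x xr xne => [|H] x xr xne; first by apply/matrixP => -[].
case: W x xr xne => [|W] x xr xne; first by apply/matrixP => ? [].
have HW : (H.+1 * W.+1)%N != 0%N by [].
set a := 2 `^ th1.1 - 1. set b := 2 `^ th1.2 - 1.
set c := 2 `^ th2.1 - 1. set d := 2 `^ th2.2 - 1.
have a0 : 0 <= a by exact: pow2_ge1.
have b0 : 0 <= b by exact: pow2_ge1.
have c0 : 0 <= c by exact: pow2_ge1.
have d0 : 0 <= d by exact: pow2_ge1.
have Eac : 2 `^ (th1.1 + th2.1) - 1 = a + c + a * c.
  by rewrite powRD ?pnatr_eq0 ?implybT // /a /c; ring.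
have Ebd : 2 `^ (th1.2 + th2.2) - 1 = b + d + b * d.
  by rewrite powRD ?pnatr_eq0 ?implybT // /b /d; ring.
set M1 := SVmax x th1.
have M1ne : M1 != 0 by exact: xne.
have s0 : forall i j, 0 <= sat x i j by move=> i j; case: (xr i j) => /andP[].
have v0 : forall i j, 0 <= bri x i j by move=> i j; case: (xr i j) => _ /andP[].
have ms0 : 0 <= chmean (sat x).
  by rewrite /chmean divr_ge0 // sumr_ge0 // => i _; rewrite sumr_ge0.
have mv0 : 0 <= chmean (bri x).
  by rewrite /chmean divr_ge0 // sumr_ge0 // => i _; rewrite sumr_ge0.
have Xs0 : 0 <= chmax (sat x) by exact: bigmax_ge_id.
have Xv0 : 0 <= chmax (bri x) by exact: bigmax_ge_id.
have M1pos : 0 < M1.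
  rewrite lt_def M1ne /M1 /SVmax le_max; apply/orP; left.
  by rewrite addr_ge0 // mulr_ge0.
have Esat : sat (SV x th1) = fun i j => (sat x i j + a * chmean (sat x)) / M1.
  by apply: funext => i; apply: funext => j; rewrite /sat /SV mxE.
have Ebri : bri (SV x th1) = fun i j => (bri x i j + b * chmean (bri x)) / M1.
  by apply: funext => i; apply: funext => j; rewrite /bri /SV mxE.
have Ehue : hue (SV x th1) = hue x.
  by apply: funext => i; apply: funext => j; rewrite /hue /SV mxE.
have M2E : SVmax (SV x th1) th2 = SVmax x (th1.1 + th2.1, th1.2 + th2.2) / M1.
  rewrite /SVmax Esat Ebri (@chmax_aff _ _ _ _ _ _ s0 (mulr_ge0 a0 ms0) M1pos) (@chmax_aff _ _ _ _ _ _ v0 (mulr_ge0 b0 mv0) M1pos).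
  rewrite !chmean_aff //= Eac Ebd -/c -/d.
  have iM : 0 <= M1^-1 by rewrite invr_ge0 ltW.
  rewrite (maxr_pMl _ _ iM); congr (Num.max _ _); field; exact: M1ne.
set M12 := SVmax x (th1.1 + th2.1, th1.2 + th2.2).
have M12ne : M12 != 0 by apply: xne; rewrite /= addr_ge0.
apply/matrixP => i j; rewrite !mxE.
rewrite M2E Esat Ebri Ehue !chmean_aff //= Eac Ebd -/c -/d.
congr (_, _, _); field; apply/andP; split => //.
Qed.
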